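(* Let $T=\{t_1,\ldots,t_N\}$ be documents containing words from a dictionary $\{w_1,\ldots,w_D\}$, and let $\#(w)$ denote the number of documents containing word $w$. Let $h_1,\ldots,h_k$ be hash functions whose values $h_j(t)$ are independent and uniform on $[0,1]$. Consider the mapper MinHashSampleMap which, for each document $t$, each word $w$ in $t$, and each $j=1,\ldots,k$, emits $((w,j)\to h_j(t))$ if and only if $h_j(t)\le\frac{c\log(Dk)}{\#(w)}$, where $c=3$. Then the expected total number of emitted key-value pairs (shuffle size) is at most $cDk\log(Dk)=O(Dk\log(Dk))$; in particular, with $k=1/\epsilon$ for $\epsilon\in(0,1]$, it is $O((D/\epsilon)\log(D/\epsilon))$.
   Context: $\log$ denotes the natural logarithm. The shuffle size is the total number of key-value pairs emitted by all mappers. *)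

(* Defs.v *)
From HB Require Import structures.
From mathcomp Require Import all_boot all_order all_algebra.
From mathcomp Require Import all_classical all_reals all_analysis.
Set Implicit Arguments. Unset Strict Implicit. Unset Printing Implicit Defensive.
Import Order.TTheory GRing.Theory Num.Theory.
Local Open Scope classical_set_scope.
Local Open Scope ring_scope.

Definition ndocs (N D : nat) (docs : 'I_N -> {set 'I_D}) (w : 'I_D) : nat :=
  #|[set t | w \in docs t]|.

Definition threshold {R : realType} (c : R) (N D k : nat)
    (docs : 'I_N -> {set 'I_D}) (w : 'I_D) : R :=
  c * ln ((D * k)%:R) / (ndocs docs w)%:R.

(* Shuffle size of MinHashSampleMap: number of triples (t, w in t, j) with
   h_j(t) <= c log(Dk)/#(w); each such triple emits one pair ((w,j) -> h_j(t)). *)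
Definition shuffle_size {R : realType} {d} {Omega : measurableType d}
    (c : R) (N D k : nat) (docs : 'I_N -> {set 'I_D})
    (h : 'I_N -> 'I_k -> Omega -> R) (om : Omega) : R :=
  \sum_(t < N) \sum_(w in docs t) \sum_(j < k)
     (if h t j om <= threshold c k docs w then 1 else 0).

Definition mutually_independent {R : realType} {d} {Omega : measurableType d}
    (P : probability Omega R) (I : finType) (X : I -> {RV P >-> R}) : Prop :=
  forall (J : {set I}) (B : I -> set R),
    (forall i, measurable (B i)) ->
    P (\big[setI/setT]_(i in J) (X i @^-1` B i)) =
    (\prod_(i in J) P (X i @^-1` B i))%E.

(* Main.v *)
Require Import Defs.
From HB Require Import structures.
From mathcomp Require Import all_boot all_order all_algebra.
From mathcomp Require Import all_classical all_reals all_analysis.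
From mathcomp Require Import ring.
Import Order.TTheory GRing.Theory Num.Theory.
Local Open Scope classical_set_scope.
Local Open Scope ring_scope.

Lemma unif_le (R : realType) (a : R) : 0 <= a ->
  (uniform_prob (@ltr01 R) `]-oo, a] <= a%:E)%E.
Proof.
move=> a0.
rewrite /uniform_prob integral_uniform_pdf.
have mS : measurable (`]-oo, a] `&` `[0%R, 1%R]) by apply: measurableI.
apply: (@le_trans _ _ (\int[lebesgue_measure]_(x in `]-oo, a] `&` `[0%R, 1%R]) (cst 1%E) x))%E.
  apply: ge0_le_integral => //.
  - by move=> x _; rewrite lee_fin uniform_pdf_ge0.
  - apply/measurable_realfun.measurable_EFinP; apply: (measurable_funS measurableT) => //; exact: measurable_uniform_pdf.
  - move=> x _; rewrite lee_fin /uniform_pdf; case: ifP => _; last by [].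
    by rewrite subr0 invr1.
rewrite integral_cst // mul1e.
apply: (@le_trans _ _ (lebesgue_measure (`[0%R, a] : set R))).
  apply: le_measure; rewrite ?inE //.
  move=> x [/=]; rewrite !in_itv /= => -> /andP[-> _] //.
rewrite lebesgue_measure_itv /=; case: ifP => _; last by rewrite lee_fin.
by rewrite sube0.
Qed.

Lemma meas_sumR d (T : measurableType d) (R : realType) (I : Type) (s : seq I)
  (p : pred I) (f : I -> T -> R) :
  (forall i, measurable_fun setT (f i)) ->
  measurable_fun setT (fun x => \sum_(i <- s | p i) f i x).
Proof.
move=> mf.
have -> : (fun x => \sum_(i <- s | p i) f i x) =
          (fun x => \sum_(i <- s) (if p i then f i x else 0)).
  by apply/funext => x; rewrite big_mkcond.
apply: measurable_sum => i; case: (p i) => //.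
Qed.

Lemma int_sumR d (T : measurableType d) (R : realType) (mu : measure T R)
  (I : Type) (s : seq I) (p : pred I) (f : I -> T -> R) :
  (forall i, measurable_fun setT (f i)) -> (forall i x, 0 <= f i x) ->
  (\int[mu]_x (\sum_(i <- s | p i) f i x)%:E =
   \sum_(i <- s | p i) \int[mu]_x (f i x)%:E)%E.
Proof.
move=> mf f0.
under eq_integral => x _ do rewrite -sumEFin big_mkcond.
rewrite ge0_integral_sum //.
- rewrite [RHS]big_mkcond; apply: eq_bigr => i _; case: (p i) => //.
  by rewrite integral0.
- move=> i; case: (p i) => //; exact/measurable_realfun.measurable_EFinP.
- by move=> i x _; case: (p i) => //; rewrite lee_fin.
Qed.

Lemma comb_bound (R : realType) (N D k : nat) (docs : 'I_N -> {set 'I_D}) (L : R) :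
  0 <= L ->
  \sum_(t < N) \sum_(w in docs t) \sum_(j < k) (L / (ndocs docs w)%:R)
   <= D%:R * k%:R * L.
Proof.
move=> L0.
under eq_bigr => t _ do rewrite big_mkcond /=.
rewrite exchange_big /=.
apply: (@le_trans _ _ (\sum_(w < D) (k%:R * L))); last first.
  by rewrite sumr_const card_ord -[X in X <= _]mulr_natl mulrA.
apply: ler_sum => w _.
rewrite -big_mkcond /=.
rewrite (eq_bigr (fun _ => (L / (ndocs docs w)%:R) *+ k)); last first.
  by move=> t _; rewrite sumr_const card_ord.
rewrite sumr_const.
have -> : #|[pred t | w \in docs t]| = ndocs docs w.
  apply: eq_card => t; rewrite !inE; apply/idP/idP => [H|/set_mem //]; exact: mem_set.
rewrite -[_ *+ k *+ _]mulr_natl -[_ *+ k]mulr_natl mulrCA.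
case n0: (ndocs docs w == 0)%N.
  by rewrite (eqP n0) mul0r mulr0; apply: mulr_ge0.
by rewrite [_%:R * (L / _)]mulrC divfK ?pnatr_eq0 ?n0.
Qed.

Theorem theorem6 (R : realType) (d : measure_display) (Omega : measurableType d)
    (P : probability Omega R) (N D k : nat) (docs : 'I_N -> {set 'I_D})
    (h : 'I_N -> 'I_k -> {RV P >-> R}) :
  (0 < D)%N -> (0 < k)%N ->
  (forall t j A, measurable A ->
     distribution P (h t j) A = uniform_prob (@ltr01 R) A) ->
  mutually_independent (fun tj : 'I_N * 'I_k => h tj.1 tj.2) ->
  let c : R := 3 in
  ('E_P[shuffle_size c docs (fun t j => h t j)]
     <= (c * D%:R * k%:R * ln ((D * k)%:R))%:E)%E /\
  (forall eps : R, 0 < eps <= 1 -> k%:R = eps^-1 ->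
     ('E_P[shuffle_size c docs (fun t j => h t j)]
        <= (c * (D%:R / eps) * ln (D%:R / eps))%:E)%E).
Proof.
move=> D0 k0 hunif _ c.
set L := ln ((D * k)%:R : R).
have L0 : 0 <= L.
  by rewrite /L ln_ge0 // ler1n muln_gt0 D0 k0.
have c0 : 0 <= c by rewrite /c.
set thr := fun w => threshold c k docs w.
have thr0 : forall w, 0 <= thr w.
  by move=> w; rewrite /thr /threshold divr_ge0 // mulr_ge0.
set A := fun t j w => (h t j) @^-1` `]-oo, thr w].
have mA : forall t j w, measurable (A t j w).
  by move=> t j w; apply: measurable_funPTI.
have PA : forall t j w, (P (A t j w) <= (thr w)%:E)%E.
  move=> t j w; have := hunif t j _ (measurable_itv `]-oo, thr w]).
  by rewrite /distribution /pushforward => ->; apply: unif_le.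
have main : ('E_P[shuffle_size c docs (fun t j => h t j)]
     <= (c * D%:R * k%:R * L)%:E)%E.
  rewrite unlock.
  have eqS : forall om, shuffle_size c docs (fun t j => h t j) om =
     \sum_(t < N) \sum_(w in docs t) \sum_(j < k) \1_(A t j w) om.
    move=> om; rewrite /shuffle_size; apply: eq_bigr => t _.
    apply: eq_bigr => w _; apply: eq_bigr => j _.
    rewrite indicE; case: ifP => H.
      by rewrite mem_set //= in_itv /= H.
    rewrite memNset // /A /= in_itv /= H //.
  under eq_integral => om _ do rewrite eqS.
  have mI : forall t j w, measurable_fun setT (\1_(A t j w) : Omega -> R).
    by move=> t j w; apply: measurable_realfun.measurable_indic.
  have I0 : forall t j w om, 0 <= (\1_(A t j w) : Omega -> R) om.
    by move=> t j w om; rewrite indicE.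
  rewrite int_sumR; last 2 first.
  - move=> t; apply: meas_sumR => w; apply: meas_sumR => j; exact: mI.
  - by move=> t om; apply: sumr_ge0 => w _; apply: sumr_ge0 => j _.
  rewrite (eq_bigr (fun t => \sum_(w in docs t) \sum_(j < k) P (A t j w))); last first.
    move=> t _; rewrite int_sumR; last 2 first.
    - move=> w; apply: meas_sumR => j; exact: mI.
    - by move=> w om; apply: sumr_ge0 => j _.
    apply: eq_bigr => w _; rewrite int_sumR //.
    by apply: eq_bigr => j _; rewrite integral_indic // setIT.
  apply: (@le_trans _ _ (\sum_(t < N) \sum_(w in docs t) \sum_(j < k) (thr w)%:E)%E).
    apply: lee_sum => t _; apply: lee_sum => w _; apply: lee_sum => j _; exact: PA.
  under eq_bigr => t _ do under eq_bigr => w _ do rewrite sumEFin.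
  under eq_bigr => t _ do rewrite sumEFin.
  rewrite sumEFin lee_fin.
  have H := @comb_bound R N D k docs (c * L) (mulr_ge0 c0 L0).
  apply: le_trans H _.
  rewrite le_eqVlt; apply/orP; left; apply/eqP; ring.
split => // eps /andP[e0 e1] keps.
have -> : D%:R / eps = ((D * k)%:R : R) by rewrite natrM keps.
by move: main; rewrite /L !natrM !mulrA.
Qed.
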